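(* Let $Y=\bigcap_{n\in\omega}U_n$, where each $U_n$ is an open $\pi$-dense subset of the Baire space $\mathcal N=(\omega^\omega,\tau_{\mathcal N})$. Then there is a Baire foliage tree on $Y$ (with the subspace topology from $\mathcal N$) that shoots into the standard foliage tree $\mathbf S$.
   Context: A tree is a pair $(Q,<)$ with $<$ irreflexive transitive such that every set of predecessors $\{v:v<x\}$ is well-ordered; $\mathrm{sons}(x)$ = set of immediate successors of $x$; a branch is an inclusion-maximal chain. A foliage tree is $\mathbf F=(\mathcal T,l)$ with $\mathcal T$ a tree (skeleton) and $\mathbf F_x=l(x)$ the leaf at node $x$. The standard foliage tree $\mathbf S$ has skeleton $(\omega^{<\omega},\subsetneq)$ and leaves $\mathbf S_x=\{p\in\omega^\omega:x\subseteq p\}$. $A\subseteq\omega^\omega$ is $\pi$-dense in the Baire space iff for every $y\in\omega^{<\omega}$ infinitely many $n$ satisfy $\mathbf S_{y^\frown\langle n\rangle}\subseteq A$. $\mathrm{fruit}_{\mathbf F}(A)=\bigcap_{x\in A}\mathbf F_x$; $\mathrm{flesh}\,\mathbf F=\bigcup_x\mathbf F_x$; $\mathrm{shoot}_{\mathbf F}(z)=\{\bigcup_{s\in C}\mathbf F_s: C$ cofinite subset of $\mathrm{sons}(z)\}$; $\mathrm{scope}_{\mathbf F}(p)=\{y:p\in\mathbf F_y\}$; for families $\gamma,\delta$, $\gamma\gg\delta$ means every nonempty $D\in\delta$ contains some nonempty $G\in\gamma$. A Baire foliage tree on a space $X$ is a foliage tree whose skeleton is isomorphic to $(\omega^{<\omega},\subsetneq)$,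 all of whose leaves are open in $X$, which is locally strict (for every non-maximal node $x$, $\mathbf F_x$ is the union of the pairwise disjoint family $(\mathbf F_s)_{s\in\mathrm{sons}(x)}$), has strict branches (it has a node and $\mathrm{fruit}_{\mathbf F}(B)$ is a singleton for every branch $B$), and whose leaf at its least node equals $X$. A foliage tree $\mathbf H$ shoots into a foliage tree $\mathbf F$ iff for every $p\in\mathrm{flesh}\,\mathbf H$ and every $y\in\mathrm{scope}_{\mathbf F}(p)$ there is $x\in\mathrm{scope}_{\mathbf H}(p)$ with $\mathrm{shoot}_{\mathbf H}(x)\gg\mathrm{shoot}_{\mathbf F}(y)$. *)

(* Defs.v *)
From Stdlib Require Import List Arith.
Import ListNotations.

Definition point := nat -> nat.
Definition pset := point -> Prop.
Definition family := pset -> Prop.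

Definition subset (A B : pset) : Prop := forall p, A p -> B p.
Definition set_eq (A B : pset) : Prop := forall p, A p <-> B p.
Definition nonempty (A : pset) : Prop := exists p, A p.

Definition baire_open (U : pset) : Prop :=
  forall p, U p -> exists n, forall q, (forall i, i < n -> q i = p i) -> U q.

Definition open_in (X A : pset) : Prop :=
  exists U, baire_open U /\ set_eq A (fun p => U p /\ X p).

(* omega^{<omega} = list nat; strict inclusion of finite sequences = strict prefix. *)
Definition strict_prefix (x y : list nat) : Prop :=
  exists l, l <> [] /\ y = x ++ l.

Definition std_leaf (x : list nat) : pset :=
  fun p => forall i, i < length x -> p i = nth i x 0.

Definition pi_dense (A : pset) : Prop :=
  forall y : list nat, forall m, exists n, m <= n /\ subset (std_leaf (y ++ [n])) A.

Record foliage_tree := FT {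
  node : Type;
  lt : node -> node -> Prop;
  leaf : node -> pset
}.

Definition is_tree (F : foliage_tree) : Prop :=
  (forall x, ~ lt F x x) /\
  (forall x y z, lt F x y -> lt F y z -> lt F x z) /\
  (* every set of predecessors is well-ordered (lt is transitive irreflexive,
     so: linearly ordered and every nonempty subset has a least element) *)
  (forall x, (forall u v, lt F u x -> lt F v x -> u = v \/ lt F u v \/ lt F v u) /\
             (forall A : node F -> Prop, (forall u, A u -> lt F u x) -> (exists u, A u) ->
                exists m, A m /\ forall u, A u -> u = m \/ lt F m u)).

Definition sons (F : foliage_tree) (x : node F) : node F -> Prop :=
  fun s => lt F x s /\ ~ exists z, lt F x z /\ lt F z s.

Definition chain (F : foliage_tree) (B : node F -> Prop) : Prop :=
  forall u v, B u -> B v -> u = v \/ lt F u v \/ lt F v u.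

Definition branch (F : foliage_tree) (B : node F -> Prop) : Prop :=
  chain F B /\ forall C, chain F C -> (forall u, B u -> C u) -> forall u, C u -> B u.

Definition fruit (F : foliage_tree) (A : node F -> Prop) : pset :=
  fun p => forall x, A x -> leaf F x p.

Definition flesh (F : foliage_tree) : pset := fun p => exists x, leaf F x p.

Definition scope (F : foliage_tree) (p : point) : node F -> Prop :=
  fun y => leaf F y p.

Definition finite_set {T : Type} (A : T -> Prop) : Prop :=
  exists l : list T, forall t, A t -> In t l.

Definition shoot (F : foliage_tree) (z : node F) : family :=
  fun G => exists C : node F -> Prop,
    (forall s, C s -> sons F z s) /\
    finite_set (fun s => sons F z s /\ ~ C s) /\
    set_eq G (fun p => exists s, C s /\ leaf F s p).

Definition refines (gamma delta : family) : Prop :=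
  forall D, delta D -> nonempty D -> exists G, gamma G /\ nonempty G /\ subset G D.

Definition shoots_into (H F : foliage_tree) : Prop :=
  forall p, flesh H p -> forall y, scope F p y ->
    exists x, scope H p x /\ refines (shoot H x) (shoot F y).

Definition locally_strict (F : foliage_tree) : Prop :=
  forall x, (exists y, lt F x y) ->
    set_eq (leaf F x) (fun p => exists s, sons F x s /\ leaf F s p) /\
    (forall s t, sons F x s -> sons F x t -> s <> t ->
       forall p, leaf F s p -> leaf F t p -> False).

Definition strict_branches (F : foliage_tree) : Prop :=
  inhabited (node F) /\
  forall B, branch F B -> exists p, forall q, fruit F B q <-> q = p.

Definition skeleton_iso_baire (F : foliage_tree) : Prop :=
  exists f : node F -> list nat,
    (forall a b, f a = f b -> a = b) /\ (forall y, exists a, f a = y) /\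
    (forall a b, lt F a b <-> strict_prefix (f a) (f b)).

Definition baire_foliage_tree (X : pset) (F : foliage_tree) : Prop :=
  skeleton_iso_baire F /\
  (forall x, open_in X (leaf F x)) /\
  locally_strict F /\
  strict_branches F /\
  exists r, (forall x, x = r \/ lt F r x) /\ set_eq (leaf F r) X.

Definition standard_tree : foliage_tree :=
  FT (list nat) strict_prefix std_leaf.

(* Main.v *)
Require Import Defs.
From Stdlib Require Import List Arith Lia ClassicalEpsilon FunctionalExtensionality Cantor Classical.
Import ListNotations.

Definition pre (p : point) (n : nat) : list nat := map p (seq 0 n).

Lemma pre_length p n : length (pre p n) = n.
Proof. unfold pre. now rewrite length_map, length_seq. Qed.

Lemma pre_nth p n i d : i < n -> nth i (pre p n) d = p i.
Proof.
  intros H. unfold pre. rewrite nth_indep with (d' := p 0) by (rewrite length_map, length_seq; lia).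
  rewrite map_nth, seq_nth by lia. reflexivity.
Qed.

Lemma pre_S p n : pre p (S n) = pre p n ++ [p n].
Proof. unfold pre. rewrite seq_S, map_app. reflexivity. Qed.

Lemma list_eq_nth (l l' : list nat) : length l = length l' ->
  (forall i, i < length l -> nth i l 0 = nth i l' 0) -> l = l'.
Proof. intros. apply nth_ext with 0 0; auto. Qed.

Lemma std_leaf_pre w p : std_leaf w p <-> pre p (length w) = w.
Proof.
  split.
  - intros H. apply list_eq_nth. now rewrite pre_length.
    intros i Hi. rewrite pre_length in Hi. rewrite pre_nth by lia. now apply H.
  - intros H i Hi. rewrite <- H. rewrite pre_nth; auto.
Qed.

Lemma std_leaf_app w l p : std_leaf (w ++ l) p -> std_leaf w p.
Proof.
  intros H i Hi. rewrite <- (app_nth1 w l 0 Hi). apply H. rewrite length_app; lia.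
Qed.

Lemma std_leaf_snoc w c p : std_leaf (w ++ [c]) p <-> std_leaf w p /\ p (length w) = c.
Proof.
  split.
  - intros H. split. eapply std_leaf_app; eauto.
    rewrite H by (rewrite length_app; simpl; lia). now rewrite nth_middle.
  - intros [H1 H2] i Hi. rewrite length_app in Hi; simpl in Hi.
    destruct (Nat.lt_ge_cases i (length w)).
    + rewrite app_nth1 by auto. now apply H1.
    + assert (i = length w) by lia. subst. now rewrite nth_middle.
Qed.

Lemma pre_agree p q n : (forall i, i < n -> q i = p i) -> pre q n = pre p n.
Proof.
  intros H. apply list_eq_nth. now rewrite !pre_length.
  intros i Hi. rewrite pre_length in Hi. rewrite !pre_nth by auto. auto.
Qed.

Lemma firstn_pre f i n : i <= n -> firstn i (pre f n) = pre f i.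
Proof.
  intros H. apply list_eq_nth. rewrite length_firstn, !pre_length; lia.
  intros j Hj. rewrite length_firstn, pre_length in Hj.
  rewrite nth_firstn. destruct (Nat.ltb_spec j i); try lia.
  rewrite !pre_nth by lia. auto.
Qed.

Lemma std_leaf_pre_self p n : std_leaf (pre p n) p.
Proof. apply std_leaf_pre. now rewrite pre_length. Qed.

Lemma std_leaf_eq w y p : std_leaf w p -> std_leaf y p -> length w = length y -> w = y.
Proof.
  intros H1 H2 E. apply std_leaf_pre in H1. apply std_leaf_pre in H2. congruence.
Qed.

Definition prefix (u v : list nat) := exists l, v = u ++ l.

Lemma strict_prefix_iff u v : strict_prefix u v <-> prefix u v /\ u <> v.
Proof.
  split.
  - intros [l [Hl ->]]. split. exists l; auto.
    intros E. apply Hl. apply (app_inv_head u). rewrite app_nil_r. auto.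
  - intros [[l ->] Hn]. exists l. split; auto. intros ->. apply Hn. now rewrite app_nil_r.
Qed.

Lemma prefix_nth u v i : prefix u v -> i < length u -> nth i v 0 = nth i u 0.
Proof. intros [l ->] H. now apply app_nth1. Qed.

Lemma prefix_length u v : prefix u v -> length u <= length v.
Proof. intros [l ->]. rewrite length_app; lia. Qed.

Lemma prefix_trans u v w : prefix u v -> prefix v w -> prefix u w.
Proof. intros [l1 ->] [l2 ->]. exists (l1 ++ l2). now rewrite app_assoc. Qed.

Lemma prefix_refl u : prefix u u.
Proof. exists []. now rewrite app_nil_r. Qed.

Lemma prefix_firstn u n : prefix (firstn n u) u.
Proof. exists (skipn n u). now rewrite firstn_skipn. Qed.

Lemma prefix_of_nth u v : length u <= length v -> (forall i, i < length u -> nth i v 0 = nth i u 0) -> prefix u v.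
Proof.
  intros H1 H2. exists (skipn (length u) v).
  assert (firstn (length u) v = u).
  { apply list_eq_nth. rewrite length_firstn; lia.
    intros i Hi. rewrite length_firstn in Hi. rewrite nth_firstn.
    destruct (Nat.ltb_spec i (length u)); try lia. auto. }
  rewrite <- (firstn_skipn (length u) v) at 1. now rewrite H.
Qed.

Definition comp (u v : list nat) := prefix u v \/ prefix v u.

Lemma comp_nth u v i : comp u v -> i < length u -> i < length v -> nth i u 0 = nth i v 0.
Proof.
  intros [H|H] H1 H2.
  - symmetry. now apply prefix_nth.
  - now apply prefix_nth.
Qed.

Lemma comp_of_nth u v : (forall i, i < length u -> i < length v -> nth i u 0 = nth i v 0) -> comp u v.
Proof.
  intros H. destruct (Nat.le_ge_cases (length u) (length v)).
  - left. apply prefix_of_nth; auto. intros. symmetry. apply H; lia.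
  - right. apply prefix_of_nth; auto. intros. apply H; lia.
Qed.

Lemma comp_eq u v : comp u v -> length u = length v -> u = v.
Proof.
  intros H E. apply list_eq_nth; auto. intros. apply comp_nth; auto; lia.
Qed.

Lemma chain_comp_iff u v : (u = v \/ strict_prefix u v \/ strict_prefix v u) <-> comp u v.
Proof.
  rewrite !strict_prefix_iff. unfold comp. split.
  - intros [->|[[H _]|[H _]]]; auto. left; apply prefix_refl.
  - intros [H|H]; destruct (list_eq_dec Nat.eq_dec u v); auto.
Qed.

Lemma sons_prefix_iff x s :
  (strict_prefix x s /\ ~ exists z, strict_prefix x z /\ strict_prefix z s) <-> exists r, s = x ++ [r].
Proof.
  split.
  - intros [[l [Hl ->]] Hn]. destruct l as [|r l]; [congruence|].
    destruct l as [|r' l]. eauto.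
    exfalso. apply Hn. exists (x ++ [r]). split.
    + exists [r]. split; auto. congruence.
    + exists (r' :: l). split. congruence. now rewrite <- app_assoc.
  - intros [r ->]. split. exists [r]. split; auto; congruence.
    intros [z [[l1 [H1 ->]] [l2 [H2 E]]]]. rewrite <- app_assoc in E.
    apply app_inv_head in E. destruct l1; [congruence|]. destruct l2; [congruence|].
    simpl in E. inversion E. destruct l1; discriminate.
Qed.

Arguments to_nat : simpl never.
Arguments of_nat : simpl never.

Section Constr.
Variable U : nat -> pset.
Hypothesis hU : forall n, baire_open (U n) /\ pi_dense (U n).

Definition Y : pset := fun p => forall n, U n p.

Lemma nxt_ex k u m : exists n, m <= n /\ subset (std_leaf (u ++ [n])) (U k).
Proof. apply (proj2 (hU k)). Qed.
Definition nxt k u m : nat := proj1_sig (constructive_indefinite_description _ (nxt_ex k u m)).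
Lemma nxt_spec k u m : m <= nxt k u m /\ subset (std_leaf (u ++ [nxt k u m])) (U k).
Proof. unfold nxt. destruct constructive_indefinite_description; auto. Qed.

Fixpoint E0 k u r := match r with 0 => nxt k u 0 | S r => nxt k u (S (E0 k u r)) end.
Definition E k u r := if excluded_middle_informative (subset (std_leaf u) (U k)) then r else E0 k u r.

Lemma E0_strict k u r r' : r < r' -> E0 k u r < E0 k u r'.
Proof.
  induction r'; intros H; [lia|]. simpl.
  pose proof (nxt_spec k u (S (E0 k u r'))) as [H1 _].
  destruct (Nat.eq_dec r r'). subst; lia. specialize (IHr' ltac:(lia)). lia.
Qed.

Lemma E_strict k u r r' : r < r' -> E k u r < E k u r'.
Proof. unfold E. destruct excluded_middle_informative; auto using E0_strict. Qed.

Lemma E_ge k u r : r <= E k u r.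
Proof.
  induction r. lia. pose proof (E_strict k u r (S r) ltac:(lia)). lia.
Qed.

Lemma E_inj k u r r' : E k u r = E k u r' -> r = r'.
Proof.
  intros H. destruct (Nat.lt_trichotomy r r') as [h|[h|h]]; auto;
  apply (E_strict k u) in h; lia.
Qed.

Lemma subset_snoc w c : subset (std_leaf (w ++ [c])) (std_leaf w).
Proof. intros p H. eapply std_leaf_app; eauto. Qed.

Lemma E_good k u r : subset (std_leaf (u ++ [E k u r])) (U k).
Proof.
  unfold E. destruct excluded_middle_informative as [h|h].
  - intros p H. apply h. eapply subset_snoc; eauto.
  - destruct r; simpl; apply nxt_spec.
Qed.

Lemma E_id k u r : subset (std_leaf u) (U k) -> E k u r = r.
Proof. unfold E. destruct excluded_middle_informative; tauto. Qed.

Definition einv k u c := epsilon (inhabits 0) (fun r => E k u r = c).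
Lemma einv_spec k u c : (exists r, E k u r = c) -> E k u (einv k u c) = c.
Proof. intros H. unfold einv. apply (epsilon_spec (inhabits 0) (fun r => E k u r = c) H). Qed.
Lemma einv_E k u r : einv k u (E k u r) = r.
Proof. apply (E_inj k u). apply einv_spec. eauto. Qed.

Definition Gb k u c : bool := Nat.eqb (E k u (einv k u c)) c.
Lemma Gb_true k u c : Gb k u c = true <-> exists r, E k u r = c.
Proof.
  unfold Gb. rewrite Nat.eqb_eq. split. eauto. apply einv_spec.
Qed.
Lemma Gb_good k u c : Gb k u c = true -> subset (std_leaf (u ++ [c])) (U k).
Proof. intros H. apply Gb_true in H as [r <-]. apply E_good. Qed.

Definition Hit k p n := Gb k (pre p n) (p n) = true.
Definition IsIp k b p n := b <= n /\ Hit k p n /\ forall m, b <= m -> Hit k p m -> n <= m.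

Lemma IsIp_uniq k b p n n' : IsIp k b p n -> IsIp k b p n' -> n = n'.
Proof. intros (H1&H2&H3) (H1'&H2'&H3'). specialize (H3 n' H1' H2'). specialize (H3' n H1 H2). lia. Qed.

Lemma least_ex (P : nat -> Prop) : (exists n, P n) -> exists n, P n /\ forall m, P m -> n <= m.
Proof.
  intros [n Hn]. apply NNPP. intros Hno.
  assert (forall n, forall m, m <= n -> ~ P m).
  { induction n0; intros m Hm Pm.
    - apply Hno. exists m. split; auto. intros. lia.
    - destruct (Nat.eq_dec m (S n0)); [|apply (IHn0 m); auto; lia].
      subst. apply Hno. exists (S n0). split; auto. intros m' Pm'.
      destruct (Nat.le_gt_cases (S n0) m'); auto. exfalso. apply (IHn0 m'); auto; lia. }
  apply (H n n); auto.
Qed.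

Definition ipf k b p := epsilon (inhabits 0) (IsIp k b p).
Lemma ipf_spec k b p : (exists n, b <= n /\ Hit k p n) -> IsIp k b p (ipf k b p).
Proof.
  intros H. destruct (least_ex (fun n => b <= n /\ Hit k p n) H) as [n [[h1 h2] h3]].
  unfold ipf. apply epsilon_spec. exists n. unfold IsIp. split; [auto|split; [auto|]].
  intros m h4 h5. apply h3; auto. Qed.

Lemma hit_of_U k p b : U k p -> exists n, b <= n /\ Hit k p n.
Proof.
  intros Hp. destruct (proj1 (hU k) p Hp) as [N HN].
  exists (Nat.max N b). split. lia.
  assert (Hs : subset (std_leaf (pre p (Nat.max N b))) (U k)).
  { intros q Hq. apply HN. intros i Hi. rewrite Hq. apply pre_nth. lia.
    rewrite pre_length. lia. }
  unfold Hit. apply Gb_true. exists (p (Nat.max N b)). apply E_id. auto.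
Qed.

Inductive phase := Free | Live (i j : nat) | Term (a : nat).
Record st := mkst { sw : list nat; sk : nat; sph : phase }.

Definition trans (s : st) (r : nat) : st :=
  match sph s with
  | Free => mkst (sw s) (sk s) (Live 0 r)
  | Live i j => if lt_dec i j then
        (if Gb (sk s) (sw s) r then mkst (sw s ++ [r]) (sk s) (Term (j - i))
         else mkst (sw s ++ [r]) (sk s) (Live (S i) j))
      else mkst (sw s ++ [E (sk s) (sw s) r]) (sk s) (Term 0)
  | Term a => mkst (sw s ++ [to_nat (a, r)]) (S (sk s)) Free
  end.

Definition idx (s : st) (p : point) : nat :=
  match sph s with
  | Free => (ipf (sk s) (length (sw s)) p - length (sw s))
             + fst (of_nat (p (S (ipf (sk s) (length (sw s)) p))))
  | Live i j => if lt_dec i j then p (length (sw s)) else einv (sk s) (sw s) (p (length (sw s)))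
  | Term a => snd (of_nat (p (length (sw s))))
  end.

Definition Inv (s : st) (p : point) : Prop :=
  std_leaf (sw s) p /\
  match sph s with
  | Free => True
  | Live i j => exists n, IsIp (sk s) (length (sw s) - i) p n /\ length (sw s) <= n /\
                 n - (length (sw s) - i) + fst (of_nat (p (S n))) = j
  | Term a => fst (of_nat (p (length (sw s)))) = a
  end.

Definition Good (s : st) : Prop :=
  (forall k', k' < sk s -> subset (std_leaf (sw s)) (U k')) /\
  match sph s with
  | Free => True
  | Live i j => i <= j /\ i <= length (sw s) /\
      forall p, std_leaf (sw s) p -> forall m, length (sw s) - i <= m -> m < length (sw s) -> ~ Hit (sk s) p m
  | Term a => subset (std_leaf (sw s)) (U (sk s))
  end.

Lemma Hit_at_w k p w : std_leaf w p -> (Hit k p (length w) <-> Gb k w (p (length w)) = true).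
Proof. intros H. unfold Hit. apply std_leaf_pre in H. rewrite H. tauto. Qed.

Lemma to_nat_fst_snd d a : fst (of_nat d) = a -> to_nat (a, snd (of_nat d)) = d.
Proof. intros <-. rewrite <- surjective_pairing. apply cancel_to_of. Qed.

Lemma good_trans s r : Good s -> Good (trans s r).
Proof.
  destruct s as [w k ph]. unfold Good, trans; simpl. intros [Hk Hph].
  destruct ph as [|i j|a]; simpl.
  - split; auto. split. lia. split. lia. intros. lia.
  - destruct Hph as (h1&h2&h3). destruct (lt_dec i j).
    + destruct (Gb k w r) eqn:G; simpl.
      * split. intros k' hk' q hq. apply Hk; auto. eapply subset_snoc; eauto.
        apply Gb_good; auto.
      * split. intros k' hk' q hq. apply Hk; auto. eapply subset_snoc; eauto.
        rewrite length_app; simpl. split. lia. split. lia.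
        intros q hq m hm1 hm2. apply std_leaf_snoc in hq as [hq1 hq2].
        destruct (Nat.eq_dec m (length w)).
        -- subst m. rewrite Hit_at_w by auto. rewrite hq2. congruence.
        -- apply (h3 q hq1); lia.
    + simpl. split. intros k' hk' q hq. apply Hk; auto. eapply subset_snoc; eauto.
      apply E_good.
  - split; auto. intros k' hk' q hq. apply std_leaf_app in hq.
    destruct (Nat.eq_dec k' k). subst; auto. apply Hk; auto; lia.
Qed.

Lemma inv_fwd s p : Good s -> U (sk s) p -> Inv s p -> Inv (trans s (idx s p)) p.
Proof.
  destruct s as [w k ph]. unfold Good, Inv, trans, idx; simpl. intros [Hk Hph] HU [Hw Hi].
  destruct ph as [|i j|a]; simpl.
  - split; auto. pose proof (ipf_spec k (length w) p (hit_of_U k p _ HU)) as Hs.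
    exists (ipf k (length w) p). rewrite Nat.sub_0_r. split; auto. split; auto. apply Hs.
  - destruct Hph as (h1&h2&h3). destruct Hi as (n&(n1&n2&n3)&hn1&hn2).
    destruct (lt_dec i j).
    + destruct (Gb k w (p (length w))) eqn:G; simpl; (split; [apply std_leaf_snoc; auto|]).
      * assert (Hh : Hit k p (length w)) by (apply Hit_at_w; auto).
        specialize (n3 (length w) ltac:(lia) Hh). assert (n = length w) by lia. subst n.
        rewrite length_app; simpl. rewrite Nat.add_1_r. lia.
      * exists n. rewrite length_app; simpl. replace (length w + 1 - S i) with (length w - i) by lia.
        split. split; auto. split. 2: lia.
        destruct (Nat.eq_dec n (length w)); try lia. subst n.
        apply Hit_at_w in n2; auto. congruence.
    + assert (i = j) by lia. subst j.
      assert (n = length w) by lia. subst n.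
      apply Hit_at_w in n2; auto. apply Gb_true in n2.
      rewrite (einv_spec _ _ _ n2). split. apply std_leaf_snoc; auto.
      simpl. try (rewrite length_app; simpl; rewrite Nat.add_1_r). lia.
  - split; auto. apply std_leaf_snoc. split; auto.
    symmetry. change (to_nat (a, snd (of_nat (p (length w)))) = p (length w)). apply to_nat_fst_snd; auto.
Qed.

Lemma inv_bwd s p r : Good s -> Inv (trans s r) p -> Inv s p /\ idx s p = r.
Proof.
  destruct s as [w k ph]. unfold Good, Inv, trans, idx; simpl. intros [Hk Hph].
  destruct ph as [|i j|a]; simpl.
  - intros [Hw (n&Hn&hn1&hn2)]. rewrite Nat.sub_0_r in *. split. auto.
    assert (E1 : ipf k (length w) p = n).
    { apply (IsIp_uniq k (length w) p); auto. apply ipf_spec. exists n. split; apply Hn. }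
    rewrite E1. auto.
  - destruct Hph as (h1&h2&h3). destruct (lt_dec i j).
    + destruct (Gb k w r) eqn:G; simpl; intros [Hw Hx]; apply std_leaf_snoc in Hw as [Hw Hpw];
        rewrite Hpw; split; auto; split; auto.
      * exists (length w). split. split. lia. split. apply Hit_at_w; auto. rewrite Hpw; auto.
        intros m hm1 hm2. destruct (Nat.le_gt_cases (length w) m); auto.
        exfalso. apply (h3 p Hw m); auto.
        split. lia. rewrite length_app in Hx; simpl in Hx. rewrite Nat.add_1_r in Hx. lia.
      * destruct Hx as (n&Hn&hn1&hn2). exists n. rewrite length_app in *; simpl in *.
        replace (length w + 1 - S i) with (length w - i) in * by lia. repeat split; try apply Hn; lia.
    + simpl. intros [Hw Hx]. apply std_leaf_snoc in Hw as [Hw Hpw]. rewrite Hpw.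
      rewrite einv_E. split; auto. split; auto. assert (i = j) by lia. subst j.
      exists (length w). split. split. lia. split. apply Hit_at_w; auto. rewrite Hpw. apply Gb_true; eauto.
      intros m hm1 hm2. destruct (Nat.le_gt_cases (length w) m); auto.
      exfalso. apply (h3 p Hw m); auto.
      split. lia. rewrite length_app in Hx; simpl in Hx. rewrite Nat.add_1_r in Hx. lia.
  - intros [Hw _]. apply std_leaf_snoc in Hw as [Hw Hpw]. rewrite Hpw, cancel_of_to. simpl.
    split; auto.
Qed.

Lemma hit_agree k p q n : (forall i, i <= n -> q i = p i) -> (Hit k q n <-> Hit k p n).
Proof.
  intros H. unfold Hit. rewrite (pre_agree p q n) by (intros; apply H; lia).
  rewrite H by lia. tauto.
Qed.

Lemma idx_cont s p : U (sk s) p -> exists M, forall q, (forall i, i < M -> q i = p i) -> idx s q = idx s p.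
Proof.
  destruct s as [w k ph]. unfold idx; simpl. intros HU. destruct ph as [|i j|a].
  - pose proof (ipf_spec k (length w) p (hit_of_U k p _ HU)) as Hs.
    set (n := ipf k (length w) p) in *. exists (S (S n)). intros q Hq.
    assert (Hq' : IsIp k (length w) q n).
    { destruct Hs as (h1&h2&h3). split; auto. split.
      - apply (hit_agree k p q n); auto. intros; apply Hq; lia.
      - intros m hm1 hm2. destruct (Nat.le_gt_cases n m); auto.
        apply h3; auto. apply (hit_agree k p q m); auto. intros; apply Hq; lia. }
    assert (E1 : ipf k (length w) q = n).
    { apply (IsIp_uniq k (length w) q); auto. apply ipf_spec. exists n. split; apply Hq'. }
    rewrite E1. rewrite (Hq (S n)) by lia. reflexivity.
  - exists (S (length w)). intros q Hq. rewrite (Hq (length w)) by lia. reflexivity.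
  - exists (S (length w)). intros q Hq. rewrite (Hq (length w)) by lia. reflexivity.
Qed.

Definition s0 : st := mkst [] 0 Free.
Definition stx (x : list nat) : st := fold_left trans x s0.

Lemma stx_snoc x r : stx (x ++ [r]) = trans (stx x) r.
Proof. unfold stx. now rewrite fold_left_app. Qed.

Lemma good_s0 : Good s0.
Proof. split; simpl; auto. intros; lia. Qed.

Lemma good_stx x : Good (stx x).
Proof.
  induction x using rev_ind. apply good_s0. rewrite stx_snoc. now apply good_trans.
Qed.

Definition hleaf (x : list nat) (p : point) : Prop :=
  Y p /\ forall i, i < length x -> idx (stx (firstn i x)) p = nth i x 0.

Lemma leaf_snoc x r p : hleaf (x ++ [r]) p <-> hleaf x p /\ idx (stx x) p = r.
Proof.
  unfold hleaf. rewrite length_app; simpl. split.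
  - intros [HY H]. split. split; auto.
    + intros i Hi. specialize (H i ltac:(lia)). rewrite firstn_app in H.
      replace (i - length x) with 0 in H by lia. simpl in H. rewrite app_nil_r in H.
      rewrite app_nth1 in H by auto. auto.
    + specialize (H (length x) ltac:(lia)). rewrite firstn_app, firstn_all, Nat.sub_diag in H.
      simpl in H. rewrite app_nil_r, nth_middle in H. auto.
  - intros [[HY H] H2]. split; auto. intros i Hi.
    destruct (Nat.eq_dec i (length x)).
    + subst i. rewrite firstn_app, firstn_all, Nat.sub_diag. simpl. rewrite app_nil_r, nth_middle. auto.
    + rewrite firstn_app. replace (i - length x) with 0 by lia. simpl. rewrite app_nil_r.
      rewrite app_nth1 by lia. apply H; lia.
Qed.

Lemma leaf_nil p : hleaf [] p <-> Y p.
Proof. unfold hleaf. simpl. split. tauto. intros; split; auto; intros; lia. Qed.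

Lemma leaf_Y x p : hleaf x p -> Y p.
Proof. intros [H _]; auto. Qed.

Lemma inv_s0 p : Inv s0 p.
Proof. split; simpl; auto. intros i Hi; simpl in Hi; lia. Qed.

Lemma leaf_inv x p : hleaf x p -> Inv (stx x) p.
Proof.
  induction x as [|r x IH] using rev_ind; intros H.
  - apply inv_s0.
  - apply leaf_snoc in H as [H1 H2]. rewrite stx_snoc, <- H2.
    apply inv_fwd. apply good_stx. apply (leaf_Y x p H1). auto.
Qed.

Definition sig_ (f : nat -> nat) (n : nat) : st := stx (pre f n).

Lemma sig_S f n : sig_ f (S n) = trans (sig_ f n) (f n).
Proof. unfold sig_. now rewrite pre_S, stx_snoc. Qed.

Lemma trans_prefix s r : prefix (sw s) (sw (trans s r)).
Proof.
  destruct s as [w k ph]. unfold trans; simpl. destruct ph as [|i j|a]; simpl.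
  apply prefix_refl. destruct (lt_dec i j). destruct (Gb k w r); simpl; eexists; eauto.
  simpl; eexists; eauto. eexists; eauto.
Qed.

Lemma trans_len_nf s r : sph s <> Free -> length (sw (trans s r)) = S (length (sw s)).
Proof.
  destruct s as [w k ph]. unfold trans; simpl. intros H. destruct ph as [|i j|a]; simpl; try congruence.
  - destruct (lt_dec i j). destruct (Gb k w r); simpl; rewrite length_app; simpl; lia.
    simpl; rewrite length_app; simpl; lia.
  - rewrite length_app; simpl; lia.
Qed.

Lemma trans_free s r : sph s = Free -> sph (trans s r) <> Free /\ sw (trans s r) = sw s.
Proof.
  destruct s as [w k ph]. unfold trans; simpl. intros ->. simpl. split; congruence.
Qed.

Lemma trans_len2 s r r' : S (length (sw s)) <= length (sw (trans (trans s r) r')).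
Proof.
  destruct (sph s) eqn:Hs.
  - destruct (trans_free s r Hs) as [H1 H2]. rewrite trans_len_nf by auto. rewrite H2. lia.
  - assert (H := trans_len_nf s r ltac:(congruence)).
    pose proof (prefix_length _ _ (trans_prefix (trans s r) r')). lia.
  - assert (H := trans_len_nf s r ltac:(congruence)).
    pose proof (prefix_length _ _ (trans_prefix (trans s r) r')). lia.
Qed.

Lemma sig_prefix f m n : m <= n -> prefix (sw (sig_ f m)) (sw (sig_ f n)).
Proof.
  induction 1. apply prefix_refl. eapply prefix_trans; eauto. rewrite sig_S. apply trans_prefix.
Qed.

Lemma sig_len f n : n <= length (sw (sig_ f (2 * n))).
Proof.
  induction n. lia. replace (2 * S n) with (S (S (2 * n))) by lia. rewrite !sig_S.
  pose proof (trans_len2 (sig_ f (2 * n)) (f (2 * n)) (f (S (2 * n)))). lia.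
Qed.

Definition qf (f : nat -> nat) : point := fun i => nth i (sw (sig_ f (2 * i + 2))) 0.

Lemma qf_leaf f n : std_leaf (sw (sig_ f n)) (qf f).
Proof.
  intros i Hi. unfold qf. pose proof (sig_len f (i + 1)).
  replace (2 * (i + 1)) with (2 * i + 2) in H by lia.
  rewrite <- (prefix_nth (sw (sig_ f n)) (sw (sig_ f (Nat.max n (2 * i + 2)))) i) by (auto; apply sig_prefix; lia).
  symmetry. apply prefix_nth. apply sig_prefix; lia. lia.
Qed.

Lemma trans_Free s r : sph s = Free -> sk (trans s r) = sk s /\ sph (trans s r) = Live 0 r.
Proof. destruct s as [w k ph]. unfold trans; simpl. intros ->. simpl. auto. Qed.

Lemma trans_Live_lt s r i j : sph s = Live i j -> i < j -> sk (trans s r) = sk s /\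
  (sph (trans s r) = Term (j - i) \/ sph (trans s r) = Live (S i) j).
Proof.
  destruct s as [w k ph]. unfold trans; simpl. intros -> h. destruct (lt_dec i j); try lia.
  destruct (Gb k w r); simpl; auto.
Qed.

Lemma trans_Live_ge s r i j : sph s = Live i j -> ~ i < j -> sk (trans s r) = sk s /\ sph (trans s r) = Term 0.
Proof.
  destruct s as [w k ph]. unfold trans; simpl. intros -> h. destruct (lt_dec i j); try lia. simpl; auto.
Qed.

Lemma trans_Term s r a : sph s = Term a -> sk (trans s r) = S (sk s) /\ sph (trans s r) = Free.
Proof. destruct s as [w k ph]. unfold trans; simpl. intros ->. simpl. auto. Qed.

Lemma claimA f d : forall n i j, sph (sig_ f n) = Live i j -> j - i <= d ->
  exists m, n <= m /\ sph (sig_ f m) = Free /\ S (sk (sig_ f n)) <= sk (sig_ f m).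
Proof.
  induction d; intros n i j H Hd.
  - destruct (trans_Live_ge (sig_ f n) (f n) i j H ltac:(lia)) as [h1 h2].
    destruct (trans_Term (sig_ f (S n)) (f (S n)) 0) as [h3 h4]. rewrite sig_S; auto.
    exists (S (S n)). rewrite sig_S. split. lia. split; auto. rewrite h3, sig_S, h1. lia.
  - destruct (lt_dec i j).
    + destruct (trans_Live_lt (sig_ f n) (f n) i j H l) as [h1 [h2|h2]].
      * destruct (trans_Term (sig_ f (S n)) (f (S n)) (j - i)) as [h3 h4]. rewrite sig_S; auto.
        exists (S (S n)). rewrite sig_S. split. lia. split; auto. rewrite h3, sig_S, h1. lia.
      * destruct (IHd (S n) (S i) j) as [m [m1 [m2 m3]]]. rewrite sig_S; auto. lia.
        exists m. split. lia. split; auto. rewrite sig_S, h1 in m3. lia.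
    + destruct (trans_Live_ge (sig_ f n) (f n) i j H n0) as [h1 h2].
      destruct (trans_Term (sig_ f (S n)) (f (S n)) 0) as [h3 h4]. rewrite sig_S; auto.
      exists (S (S n)). rewrite sig_S. split. lia. split; auto. rewrite h3, sig_S, h1. lia.
Qed.

Lemma reach f n : exists m, n <= m /\ sph (sig_ f m) = Free /\ S (sk (sig_ f n)) <= sk (sig_ f m).
Proof.
  destruct (sph (sig_ f n)) eqn:H.
  - destruct (trans_Free (sig_ f n) (f n) H) as [h1 h2].
    destruct (claimA f (f n) (S n) 0 (f n)) as [m [m1 [m2 m3]]]. rewrite sig_S; auto. lia.
    exists m. split. lia. split; auto. rewrite sig_S, h1 in m3. lia.
  - apply (claimA f (j - i) n i j H). lia.
  - destruct (trans_Term (sig_ f n) (f n) a H) as [h1 h2].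
    exists (S n). rewrite sig_S. split. lia. split; auto. lia.
Qed.

Lemma sk_unbounded f K : exists m, K <= sk (sig_ f m).
Proof.
  induction K. exists 0; lia. destruct IHK as [m Hm].
  destruct (reach f m) as [m' [_ [_ H]]]. exists m'. lia.
Qed.

Lemma qf_Y f : Y (qf f).
Proof.
  intros k. destruct (sk_unbounded f (S k)) as [m Hm].
  destruct (good_stx (pre f m)) as [HG _]. apply (HG k). unfold sig_ in Hm. lia.
  apply qf_leaf.
Qed.

Lemma qf_inv f n : Inv (sig_ f n) (qf f).
Proof.
  destruct (reach f n) as [m [m1 [m2 _]]].
  assert (Hm : Inv (sig_ f m) (qf f)). { split. apply qf_leaf. rewrite m2; auto. }
  assert (Hd : forall d n, Inv (sig_ f (n + d)) (qf f) -> Inv (sig_ f n) (qf f)).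
  { induction d; intros n' H. rewrite Nat.add_0_r in H; auto.
    replace (n' + S d) with (S n' + d) in H by lia. apply IHd in H.
    rewrite sig_S in H. apply inv_bwd in H. apply H. apply good_stx. }
  apply (Hd (m - n)). replace (n + (m - n)) with m by lia. auto.
Qed.

Lemma qf_idx f i : idx (sig_ f i) (qf f) = f i.
Proof.
  pose proof (qf_inv f (S i)) as H. rewrite sig_S in H. apply inv_bwd in H. apply H. apply good_stx.
Qed.

Lemma qf_leaf_path f n : hleaf (pre f n) (qf f).
Proof.
  split. apply qf_Y. intros i Hi. rewrite pre_length in Hi.
  rewrite firstn_pre by lia. rewrite pre_nth by auto. apply qf_idx.
Qed.

Lemma path_unique f p : (forall n, hleaf (pre f n) p) -> p = qf f.
Proof.
  intros H. apply functional_extensionality. intros i.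
  pose proof (leaf_inv _ _ (H (2 * i + 2))) as [Hl _].
  pose proof (sig_len f (i + 1)). replace (2 * (i + 1)) with (2 * i + 2) in H0 by lia.
  unfold qf. apply Hl. unfold sig_ in H0. lia.
Qed.

Lemma pre_nth_self x : pre (fun t => nth t x 0) (length x) = x.
Proof.
  apply list_eq_nth. now rewrite pre_length. intros i Hi. rewrite pre_length in Hi.
  rewrite pre_nth; auto.
Qed.

Lemma leaf_nonempty x : exists p, hleaf x p.
Proof.
  exists (qf (fun t => nth t x 0)). rewrite <- (pre_nth_self x) at 1. apply qf_leaf_path.
Qed.

End Constr.

Lemma branch_path (B : list nat -> Prop) :
  (forall u v, B u -> B v -> comp u v) ->
  (forall z, (forall u, B u -> comp u z) -> B z) ->
  exists f : nat -> nat, forall x, B x <-> x = pre f (length x).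
Proof.
  intros Hc Hm.
  assert (Hfirst : forall x n, B x -> B (firstn n x)).
  { intros x n Hx. apply Hm. intros u Hu. apply comp_of_nth. intros i h1 h2.
    rewrite length_firstn in h2. rewrite nth_firstn. destruct (Nat.ltb_spec i n); try lia.
    apply comp_nth; auto; lia. }
  assert (Hlen : forall n, exists x, B x /\ length x = n).
  { induction n.
    - exists []. split; auto. apply Hm. intros u _. right. exists u. auto.
    - destruct IHn as [x [Hx Hxl]]. apply NNPP. intros Hno.
      assert (Hle : forall u, B u -> length u <= n).
      { intros u Hu. destruct (Nat.le_gt_cases (length u) n); auto. exfalso. apply Hno.
        exists (firstn (S n) u). split. auto. rewrite length_firstn. lia. }
      apply Hno. exists (x ++ [0]). split. 2: (rewrite length_app; simpl; lia).
      apply Hm. intros u Hu. apply comp_of_nth. intros i h1 h2.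
      specialize (Hle u Hu). rewrite app_nth1 by lia. apply comp_nth; auto; lia. }
  assert (pick : forall n, {x | B x /\ length x = n}).
  { intros n. apply constructive_indefinite_description. auto. }
  exists (fun n => nth n (proj1_sig (pick (S n))) 0).
  assert (Hdir : forall x, B x -> x = pre (fun n => nth n (proj1_sig (pick (S n))) 0) (length x)).
  { intros x Hx. apply list_eq_nth. now rewrite pre_length. intros i Hi.
    rewrite pre_nth by auto. destruct (pick (S i)) as [z [Hz Hzl]]; simpl.
    apply comp_nth; auto; lia. }
  intros x. split. apply Hdir. intros Ex.
  destruct (pick (length x)) as [z [Hz Hzl]] eqn:Ez.
  rewrite Ex. rewrite <- Hzl. rewrite <- (Hdir z Hz). auto.
Qed.

Lemma ivt (L : nat -> nat) a M : L 0 <= a -> a < L M -> (forall n, L (S n) <= S (L n)) ->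
  exists n, L n = a /\ L (S n) = S a.
Proof.
  intros H0 HM HS. induction M. lia.
  destruct (Nat.lt_ge_cases a (L M)). auto.
  exists M. specialize (HS M). lia.
Qed.

Lemma to_nat_ge a r : r <= to_nat (a, r).
Proof. unfold to_nat. cbn. lia. Qed.

Lemma sum_bound (y : list nat) (L : list (list nat)) t :
  In t L -> nth (length y) t 0 <= list_sum (map (fun t => nth (length y) t 0) L).
Proof.
  induction L; simpl. tauto. intros [->|H]. lia. specialize (IHL H). lia.
Qed.

Section Main.
Variable U : nat -> pset.
Hypothesis hU : forall n, baire_open (U n) /\ pi_dense (U n).

Local Notation tr := (trans U hU).
Local Notation lf := (hleaf U hU).
Local Notation sx := (stx U hU).
Local Notation idx' := (idx U hU).

Definition child (s : st) (r : nat) := nth (length (sw s)) (sw (tr s r)) 0.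

Lemma child_spec s r : sph s <> Free -> sw (tr s r) = sw s ++ [child s r] /\ r <= child s r.
Proof.
  destruct s as [w k ph]; unfold child, trans; simpl. intros H.
  destruct ph as [|i j|a]; [congruence| |].
  - destruct (lt_dec i j); [destruct (Gb U hU k w r)|]; simpl; rewrite nth_middle; split; auto.
    apply E_ge.
  - simpl; rewrite nth_middle; split; auto. apply to_nat_ge.
Qed.

Lemma trans_len_le s r : length (sw (tr s r)) <= S (length (sw s)).
Proof.
  destruct (sph s) eqn:Hs.
  - destruct (trans_free U hU s r Hs) as [_ H]. rewrite H. lia.
  - rewrite trans_len_nf by congruence. lia.
  - rewrite trans_len_nf by congruence. lia.
Qed.

Lemma NB_ex x p : Y U p -> forall n, exists N, forall q, (forall i, i < N -> q i = p i) ->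
  forall i, i < n -> idx' (sx (firstn i x)) q = idx' (sx (firstn i x)) p.
Proof.
  intros HY. induction n.
  - exists 0. intros; lia.
  - destruct IHn as [N1 HN1]. destruct (idx_cont U hU (sx (firstn n x)) p (HY _)) as [M HM].
    exists (Nat.max N1 M). intros q Hq i Hi.
    destruct (Nat.eq_dec i n).
    + subst. apply HM. intros; apply Hq; lia.
    + apply HN1; auto. intros; apply Hq; lia. lia.
Qed.

Lemma leaf_open x : open_in (fun p => forall n, U n p) (lf x).
Proof.
  exists (fun q => exists p N, lf x p /\
     (forall q', (forall i, i < N -> q' i = p i) -> forall i, i < length x ->
         idx' (sx (firstn i x)) q' = idx' (sx (firstn i x)) p) /\
     (forall i, i < N -> q i = p i)).
  split.
  - intros q [p [N [H1 [H2 H3]]]]. exists N. intros q' Hq'. exists p, N. split; auto. split; auto.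
    intros i Hi. rewrite Hq'; auto.
  - intros q. split.
    + intros Hq. split; [|apply (leaf_Y U hU x q Hq)].
      destruct (NB_ex x q (leaf_Y U hU x q Hq) (length x)) as [N HN].
      exists q, N. split; auto.
    + intros [[p [N [H1 [H2 H3]]]] HY]. split. exact HY.
      intros i Hi. rewrite (H2 q H3 i Hi). apply H1. auto.
Qed.

Definition Htree := FT (list nat) strict_prefix lf.

Lemma sons_H x s : sons Htree x s <-> exists r, s = x ++ [r].
Proof. unfold sons; simpl. apply sons_prefix_iff. Qed.

Lemma sons_S y s : sons standard_tree y s <-> exists r, s = y ++ [r].
Proof. unfold sons; simpl. apply sons_prefix_iff. Qed.

Fixpoint tau (p : point) (n : nat) : st :=
  match n with 0 => s0 | S n => tr (tau p n) (idx' (tau p n) p) end.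

Lemma stx_pre_g p n : sx (pre (fun t => idx' (tau p t) p) n) = tau p n.
Proof.
  induction n. reflexivity. rewrite pre_S, stx_snoc, IHn. reflexivity.
Qed.

Lemma leaf_g p n : Y U p -> lf (pre (fun t => idx' (tau p t) p) n) p.
Proof.
  intros HY. induction n. apply leaf_nil; auto.
  rewrite pre_S. apply leaf_snoc. split; auto. rewrite stx_pre_g. reflexivity.
Qed.

Lemma shoot_main p y : Y U p -> std_leaf y p ->
  exists x, lf x p /\ refines (shoot Htree x) (shoot standard_tree y).
Proof.
  intros HY Hy. set (g := fun t => idx' (tau p t) p).
  set (L := fun n => length (sw (sx (pre g n)))).
  destruct (ivt L (length y) (2 * (length y + 1))) as [n [Hn1 Hn2]].
  - unfold L. simpl. lia.
  - unfold L. pose proof (sig_len U hU g (length y + 1)). unfold sig_ in H. lia.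
  - intros m. unfold L. rewrite pre_S, stx_snoc. apply trans_len_le.
  - set (sg := sx (pre g n)) in *.
  assert (Hnf : sph sg <> Free).
  { intros Hf. unfold L in Hn2. rewrite pre_S, stx_snoc in Hn2. fold sg in Hn2.
    destruct (trans_free U hU sg (g n) Hf) as [_ E1]. unfold L in Hn1. fold sg in Hn1. rewrite E1, Hn1 in Hn2. lia. }
  assert (Hw : sw sg = y).
  { pose proof (leaf_inv U hU _ _ (leaf_g p n HY)) as [Hi _]. fold g sg in Hi.
    apply (std_leaf_eq _ _ p Hi Hy). apply Hn1. }
  exists (pre g n). split. apply leaf_g; auto.
  intros D [C' [HC'sons [[Ls HLs] HD]]] _.
  set (bound := list_sum (map (fun t => nth (length y) t 0) Ls)).
  set (C := fun s => exists r, s = pre g n ++ [r] /\ bound < child sg r).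
  exists (fun q => exists s, C s /\ lf s q). split; [|split].
  * exists C. split; [|split].
    + intros s [r [-> _]]. apply sons_H. eauto.
    + exists (map (fun r => pre g n ++ [r]) (seq 0 (S bound))). intros s [Hs Hn].
      apply sons_H in Hs as [r ->]. apply in_map_iff. exists r. split; auto. apply in_seq.
      assert (child sg r <= bound).
      { destruct (le_lt_dec (child sg r) bound); auto. exfalso. apply Hn. exists r; auto. }
      pose proof (proj2 (child_spec sg r Hnf)). lia.
    + intros q. simpl. tauto.
  * destruct (leaf_nonempty U hU (pre g n ++ [S bound])) as [q Hq]. exists q.
    exists (pre g n ++ [S bound]). split; auto. exists (S bound). split; auto.
    pose proof (proj2 (child_spec sg (S bound) Hnf)). lia.
  * intros q [s [[r [-> Hr]] Hq]]. apply (proj2 (HD q)). exists (y ++ [child sg r]). split.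
    + apply NNPP. intros HnC. assert (Hin : In (y ++ [child sg r]) Ls).
      { apply HLs. split; auto. apply sons_S. eauto. }
      apply (sum_bound y) in Hin. rewrite nth_middle in Hin. fold bound in Hin. lia.
    + pose proof (leaf_inv U hU _ _ Hq) as [Hi _]. rewrite stx_snoc in Hi. fold sg in Hi.
      rewrite (proj1 (child_spec sg r Hnf)), Hw in Hi. exact Hi.
Qed.

End Main.

Theorem mainTheorem4 (U : nat -> pset)
  (hU : forall n, baire_open (U n) /\ pi_dense (U n)) :
  exists H : foliage_tree,
    baire_foliage_tree (fun p => forall n, U n p) H /\ shoots_into H standard_tree.
Proof.
  exists (Htree U hU). split.
  - unfold baire_foliage_tree. split; [|split; [|split; [|split]]].
    + exists (fun a => a). simpl. split; [auto|split; [eauto|tauto]].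
    + intros x. apply leaf_open.
    + intros x _. split.
      * intros p. split.
        -- intros Hp. exists (x ++ [idx U hU (stx U hU x) p]). split. apply sons_H; eauto.
           apply leaf_snoc. auto.
        -- intros [s [Hs Hl]]. apply sons_H in Hs as [r ->]. apply leaf_snoc in Hl. apply Hl.
      * intros s t Hs Ht Hst p Hps Hpt. apply sons_H in Hs as [r ->]. apply sons_H in Ht as [r' ->].
        apply leaf_snoc in Hps as [_ E1]. apply leaf_snoc in Hpt as [_ E2]. apply Hst. congruence.
    + split. constructor. exact []. intros B [Hch Hmax]. simpl in Hch, Hmax.
      assert (Hc : forall u v, B u -> B v -> comp u v).
      { intros u v Hu Hv. apply chain_comp_iff. apply Hch; auto. }
      destruct (branch_path B Hc) as [f Hf].
      { intros z Hz. apply (Hmax (fun u => B u \/ u = z)).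
        - intros u v [Hu| ->] [Hv| ->].
          + apply Hch; auto.
          + apply chain_comp_iff. apply Hz; auto.
          + apply chain_comp_iff. destruct (Hz v Hv); unfold comp; tauto.
          + left; auto.
        - intros u Hu; left; auto.
        - right; auto. }
      exists (qf U hU f). intros q. split.
      * intros Hq. apply (path_unique U hU). intros n. apply Hq. apply Hf. rewrite pre_length. auto.
      * intros ->. intros x Hx. apply Hf in Hx. simpl. rewrite Hx. apply qf_leaf_path.
    + exists []. split.
      * intros x. destruct x as [|a x]. left; auto. right. exists (a :: x). split; [congruence|auto].
      * intros p. apply leaf_nil.
  - intros p [x0 Hx0] y Hy. simpl in Hx0, Hy. apply shoot_main. eapply leaf_Y; eauto. exact Hy.
Qed.
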